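(* Let $T$ be a p-string of length $n$, let $v$ be a node of $\mathrm{PPH}(T)$, and let $a\in\Sigma\cup\{0,\ldots,n-1\}$. Suppose $\mathrm{rslink}(a,v)=u$, where $u$ is a node of $\mathrm{PPH}(T)$. Then for every p-string $X$ with $\mathrm{prev}(X)=u$, we have $\mathrm{prev}(X[2..|X|])=v$.
   Context: Let $\Sigma$ and $\Pi$ be disjoint alphabets. A p-string is a finite string over $\Sigma\cup\Pi$. For a string $S$, $S[i]$ is its $i$-th character, $S[i..j]$ is the substring from position $i$ to $j$ (empty if $j<i$), and $S[i..]=S[i..|S|]$. The previous encoding $\mathrm{prev}(S)$ of a p-string $S$ of length $n$ is the sequence of length $n$ defined by: - $\mathrm{prev}(S)[i]=S[i]$ if $S[i]\in\Sigma$; - $\mathrm{prev}(S)[i]=0$ if $S[i]\in\Pi$ does not occur in $S[1..i-1]$; - $\mathrm{prev}(S)[i]=i-j$ otherwise, where $j<i$ is the largest position with $S[j]=S[i]$. Sequence hash tree. Let $\langle S_1,\ldots,S_k\rangle$ be a sequence of strings with $S_1=\varepsilon$ and with $S_i$ not a prefix of $S_j$ for any $j<i$. Its sequence hash tree is built as follows. Start from a root representing $\varepsilon$. For $i=2,\ldots,k$, insert as a new node the shortest prefix $p_i$ of $S_i$ that is not yet a node. Attach it as a child of the longest prefix $q_i$ of $S_i$ that is already a node, via an edge labeled $S_i[|q_i|+1]$. The parameterized position heap $\mathrm{PPH}(T)$ is the sequence hash tree of $\langle\varepsilon,\mathrm{prev}(T[n..]),\ldots,\mathrm{prev}(T[1..])\rangle$.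 Each node is identified with the string of edge labels on the path from the root to it, and $|v|$ denotes its length (the node depth). A string is represented by $\mathrm{PPH}(T)$ if it is spelled by a path from the root. Reversed suffix links. For a node $v$ and $a\in\Sigma\cup\{0,\ldots,n-1\}$, $\mathrm{rslink}(a,v)$ is defined as follows: - if $a\in\Sigma\cup\{0\}$ and $av$ is represented by $\mathrm{PPH}(T)$, then $\mathrm{rslink}(a,v)=av$; - if $a\in\{1,\ldots,n-1\}$, $v[a]=0$, and $u=0\,v[1..a-1]\,a\,v[a+1..|v|]$ is represented by $\mathrm{PPH}(T)$, then $\mathrm{rslink}(a,v)=u$; - otherwise $\mathrm{rslink}(a,v)$ is undefined. *)

(* Defs.v *)
From mathcomp Require Import all_boot.
Set Implicit Arguments. Unset Strict Implicit. Unset Printing Implicit Defensive.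

(* A p-string over disjoint alphabets Sigma (static symbols) and Pi
   (parameter symbols): a character is  inl c  (c in Sigma) or  inr p
   (p in Pi); disjointness is built into the sum type.
   The prev-encoding alphabet Sigma ∪ {0,1,2,...} is  Sigma + nat. *)
Definition pstring (Sigma Pi : Type) := seq (Sigma + Pi)%type.
Definition pcode (Sigma : Type) := seq (Sigma + nat)%type.

Section Defs.
Variables (Sigma Pi : eqType).

(* Value of prev(s) at 0-indexed position i, where x = s[i]
   (1-indexed position i+1 in the paper):
   - x in Sigma                         -> x
   - x in Pi, not occurring in s[0..i-1] -> 0
   - otherwise                          -> i - j, j < i the last occurrence. *)
Definition prev_at (s : pstring Sigma Pi) (i : nat) (x : (Sigma + Pi)%type)
  : (Sigma + nat)%type :=
  match x with
  | inl c => inl c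
  | inr p =>
      let pre := take i s in
      let k := index (inr p) (rev pre) in
      if k < size pre then inr k.+1 else inr 0
  end.

Definition prev_encoding (s : pstring Sigma Pi) : pcode Sigma :=
  [seq prev_at s ix.1 ix.2 | ix <- zip (iota 0 (size s)) s].

(* Nodes are identified with the strings they spell,
   so the tree is determined by its (prefix-closed) set of nodes; the
   parent of a new node p is p minus its last character, and the edge
   label is that last character. *)
Definition sht_insert (nodes : seq (pcode Sigma)) (w : pcode Sigma)
  : seq (pcode Sigma) :=
  let k := find (fun k => take k w \notin nodes) (iota 0 (size w).+1) in
  if k <= size w then rcons nodes (take k w) else nodes.

Definition sht (ss : seq (pcode Sigma)) : seq (pcode Sigma) :=
  foldl sht_insert [:: [::]] ss.

(* PPH(T) = sequence hash tree of <eps, prev(T[n..]), ..., prev(T[1..])>;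
   T[i..] = drop (i-1) T. *)
Definition PPH (T : pstring Sigma Pi) : seq (pcode Sigma) :=
  sht [seq prev_encoding (drop k T) | k <- rev (iota 0 (size T))].

(* A string is represented by PPH(T) iff it is spelled by a path from the
   root; since edges carry single characters, such a path ends at a node. *)
Definition represented (T : pstring Sigma Pi) (w : pcode Sigma) : bool :=
  w \in PPH T.

(* Reversed suffix links; None = undefined.  Domain of a:
   Sigma ∪ {0,...,n-1} with n = |T|. *)
Definition rslink (T : pstring Sigma Pi) (a : (Sigma + nat)%type)
  (v : pcode Sigma) : option (pcode Sigma) :=
  match a with
  | inl c => if represented T (a :: v) then Some (a :: v) else None
  | inr 0 => if (0 < size T) && represented T (a :: v)
             then Some (a :: v) else None
  | inr k =>
      (* 1 <= k <= n-1, v[k] = 0 (1-indexed), and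
         u = 0 v[1..k-1] k v[k+1..|v|] is represented *)
      let u := inr 0 :: set_nth (inr 0) v k.-1 (inr k) in
      if [&& k < size T, k <= size v,
             nth (inr 1) v k.-1 == inr 0 & represented T u]
      then Some u else None
  end.
End Defs.

(* Main.v *)
Require Import Defs.
From mathcomp Require Import all_boot.
Set Implicit Arguments. Unset Strict Implicit.

Section Aux.
Variables (Sigma Pi : eqType).

Definition is_inr (y : (Sigma + Pi)%type) := if y is inr _ then true else false.

Lemma prev_at_bound (s : pstring Sigma Pi) (j : nat) (y : (Sigma + Pi)%type) (m : nat) :
  Defs.prev_at s j y = inr m -> m <= j.
Proof.
case: y => [c|p] //=.
case: ifP => H [<-] //.
apply: leq_trans H _; rewrite size_take; case: ltnP => // /ltnW //.
Qed.

Lemma prev_at_new (s : pstring Sigma Pi) (j : nat) (p : Pi) :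
  inr p \notin take j s -> Defs.prev_at s j (inr p) = inr 0.
Proof.
move=> H /=; rewrite memNindex ?mem_rev // size_rev ltnn //.
Qed.

Lemma prev_cons (x : Sigma + Pi) (s : pstring Sigma Pi) (j : nat) (y : (Sigma + Pi)%type) :
  j < size s ->
  Defs.prev_at (x :: s) j.+1 y =
  if [&& y == x, is_inr y & y \notin take j s] then inr j.+1 else Defs.prev_at s j y.
Proof.
move=> Hj; case: y => [c|p] /=; first by rewrite andbF.
rewrite rev_cons -cats1 index_cat mem_rev /= size_rev.
have Hsz : size (take j s) = j by rewrite size_take Hj.
case: (boolP (inr p \in take j s)) => Hin /=.
  rewrite andbF.
  have Hl : index (inr p) (rev (take j s)) < size (take j s).
    by rewrite -size_rev index_mem mem_rev.
  by rewrite Hl (ltn_trans Hl) // ltnS leqnn.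
rewrite andbT memNindex ?mem_rev // size_rev ltnn Hsz.
case: eqP => [->|Hne] /=; first by rewrite eqxx addn0 ltnS leqnn.
rewrite addn1 ltnn /=; case: eqP => // E; by case: Hne.
Qed.

Lemma size_prev (s : pstring Sigma Pi) : size (prev_encoding s) = size s.
Proof. by rewrite /prev_encoding size_map size_zip size_iota minnn. Qed.

Lemma nth_prev (s : pstring Sigma Pi) (d : (Sigma + nat)%type) (d' : (Sigma + Pi)%type) (i : nat) :
  i < size s -> nth d (prev_encoding s) i = Defs.prev_at s i (nth d' s i).
Proof.
move=> Hi; rewrite /prev_encoding (nth_map (0, d')); last first.
  by rewrite size_zip size_iota minnn.
by rewrite nth_zip ?size_iota // nth_iota.
Qed.

Definition Q (w : pcode Sigma) :=
  forall j m, nth (inr 0) w j = inr m -> m <= j.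

Lemma Q_prev (s : pstring Sigma Pi) : Q (prev_encoding s).
Proof.
move=> j m; case: (ltnP j (size s)) => Hj.
  have [y _] : exists y, y \in s by case: s Hj => // y s _; exists y; rewrite in_cons eqxx.
  rewrite (@nth_prev _ _ y) //; exact: prev_at_bound.
by rewrite nth_default ?size_prev // => -[<-].
Qed.

Lemma Q_take (w : pcode Sigma) (k : nat) : Q w -> Q (take k w).
Proof.
move=> H j m; case: (ltnP j k) => Hj.
  rewrite nth_take //; exact: H.
by rewrite nth_default ?size_take_min ?(leq_trans (geq_minl _ _)) // => -[<-].
Qed.

Lemma Q_fold (ss : seq (pcode Sigma)) (nodes : seq (pcode Sigma)) :
  (forall w, w \in nodes -> Q w) -> (forall w, w \in ss -> Q w) ->
  forall w, w \in foldl (@sht_insert Sigma) nodes ss -> Q w.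
Proof.
elim: ss nodes => [|w ss IH] nodes Hn Hs //=.
apply: IH; last by move=> w' Hw'; apply: Hs; rewrite in_cons Hw' orbT.
move=> w'; rewrite /sht_insert; case: ifP => _; last exact: Hn.
rewrite mem_rcons in_cons => /orP [/eqP ->|]; last exact: Hn.
by apply: Q_take; apply: Hs; rewrite in_cons eqxx.
Qed.

Lemma Q_PPH (T : pstring Sigma Pi) (w : pcode Sigma) : w \in PPH T -> Q w.
Proof.
apply: Q_fold.
  by move=> w'; rewrite inE => /eqP -> j m; rewrite nth_nil => -[<-].
by move=> w' /mapP [k _ ->]; apply: Q_prev.
Qed.

End Aux.

Theorem lemma3 (Sigma Pi : eqType) (T : pstring Sigma Pi)
  (v : pcode Sigma) (a : (Sigma + nat)%type) (u : pcode Sigma) :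
  v \in PPH T ->
  match a with inl _ => True | inr k => k < size T end ->
  rslink T a v = Some u ->
  u \in PPH T ->
  forall X : pstring Sigma Pi, prev_encoding X = u -> prev_encoding (behead X) = v.
Proof.
move=> Hv _ Hr _ [|x X'] HX.
  by move: Hr; rewrite -HX; case: a => [c|[|k]] /=; case: ifP.
have Qv := Q_PPH Hv.
have Hs : size u = (size X').+1 by rewrite -HX size_prev.
have H0 : nth (inr 0) u 0 = Defs.prev_at (x :: X') 0 x.
  by rewrite -HX (@nth_prev _ _ _ _ x).
have Hj : forall j, j < size X' -> nth (inr 0) u j.+1 =
   if [&& nth x X' j == x, is_inr (nth x X' j) & nth x X' j \notin take j X']
   then inr j.+1 else Defs.prev_at X' j (nth x X' j).
  by move=> j Hj; rewrite -HX (@nth_prev _ _ _ _ x) // prev_cons.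
have Gj : forall j, j < size X' -> nth (inr 0) (prev_encoding X') j = Defs.prev_at X' j (nth x X' j).
  by move=> j Hj'; rewrite (@nth_prev _ _ _ _ x).
clear HX; case: a Hr => [c|[|k]] /=.
- case: ifP => // _ [Hu]; subst u.
  move: H0 => /=; case E: x => [c'|p] //= [Hc]; subst c'.
  apply: (eq_from_nth (x0 := inr 0)); first by rewrite size_prev; case: Hs.
  move=> j; rewrite size_prev => Hj'; rewrite Gj //.
  move: (Hj j Hj') => /=; case: ifP => [/and3P [/eqP Ee Hi _]|_ ->] //.
  by rewrite Ee E in Hi.
- case: ifP => // _ [Hu]; subst u.
  apply: (eq_from_nth (x0 := inr 0)); first by rewrite size_prev; case: Hs.
  move=> j; rewrite size_prev => Hj'; rewrite Gj //.
  move: (Hj j Hj') => /=; case: ifP => _ // Hvj.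
  by have := Qv _ _ Hvj; rewrite ltnn.
- case: ifP => // /and4P [_ Hk Hvk _] [Hu]; subst u.
  have Hk' : k < size v by [].
  move: Hs; rewrite /= size_set_nth (maxn_idPr Hk) => -[Hs].
  apply: (eq_from_nth (x0 := inr 0)); first by rewrite size_prev.
  move=> j; rewrite size_prev => Hj'; rewrite Gj //.
  move: (Hj j Hj') => /=; rewrite nth_set_nth /=.
  case: eqP => [->|Hne].
    rewrite (set_nth_default (inr 1)) // (eqP Hvk).
    case: ifP => [/and3P [_ Hi Hn] _|_ Hp].
      by move: Hi Hn; case: (nth x X' k) => // p _; apply: prev_at_new.
    by have := prev_at_bound (esym Hp); rewrite ltnn.
  case: ifP => _ // Hvj.
  by have := Qv _ _ Hvj; rewrite ltnn.
Qed.
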